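(* Let $\ell\in\{0,1,2,3\}$, $M,H\in\mathbb N$ and $p\in X_\ell$. Then there is a set $\Lambda\subseteq\mathbb N$ such that (1) $\lim_{N\to\infty}\frac1N\#(\{1,\dots,N\}\cap\Lambda)=1$, and (2) for every $n\in\Lambda$, the truncation $[T^{n+h}p]_M$ is the same for all $0\le h\le H-1$.
   Context: Fix integers $2\le q_1<q_2<\cdots$ such that $q_{k+1}>q_k^4+3q_k$ for every $k\ge1$. For $k\ge1$ put $q^{(0)}_k=q_{2k}$, $q^{(1)}_k=q_{2k+1}$, $q^{(2)}_k=q^{(0)}_k-1$, $q^{(3)}_k=q^{(1)}_k-1$, and $L^{(i)}_k=\lfloor q^{(i)}_{k+1}/(3q^{(i)}_k)\rfloor$. Let $s^{(i)}_k\in\{-1,0,1\}^{\mathbb N}$ (indices $n\ge1$) be given by $s^{(i)}_k(n)=1$ if $n=jq^{(i)}_k$ with $1\le j\le L^{(i)}_k$, $s^{(i)}_k(n)=-1$ if $n=jq^{(i)}_k$ with $L^{(i)}_k<j\le2L^{(i)}_k$, and $s^{(i)}_k(n)=0$ otherwise. For $w\in\{-1,0,1\}^{\mathbb N}$ and $p\in\mathbb N_0$ let $\sigma^{-p}w$ be defined by $(\sigma^{-p}w)(n)=0$ for $1\le n\le p$ and $(\sigma^{-p}w)(n)=w(n-p)$ for $n>p$. For $l\le m$ write $w|_l^m=(w_l,\dots,w_m)$. Let $R^{(i)}_k=\{(\sigma^{-p}s^{(i)}_k)|_{q^{(i)}_k}^{q^{(i)}_{k+1}-1}:p=0,1,\dots,q^{(i)}_k\}$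 and $P^{(i)}=\{y\in\{-1,0,1\}^{\mathbb N}: y(n)=0\text{ for }1\le n<q^{(i)}_1,\ y|_{q^{(i)}_k}^{q^{(i)}_{k+1}-1}\in R^{(i)}_k\text{ for all }k\ge1\}$. Let $Z=\{-1,0,1\}^{\mathbb N}\times\{-1,0,1\}^{\mathbb Z}$, where each factor carries the metric $d(u,v)=3^{-\min\{|m|:u_m\neq v_m\}}$ and $Z$ the maximum of the two. $\sigma$ is the left shift $(\sigma u)_m=u_{m+1}$ (invertible on $\{-1,0,1\}^{\mathbb Z}$). Define $T:Z\to Z$, $T(y,z)=(\sigma y,\sigma^{y_1}z)$, and $X_i=\overline{\bigcup_{n\ge0}T^n(P^{(i)}\times\{-1,0,1\}^{\mathbb Z})}$ for $i\in\{0,1,2,3\}$. For $p=(y,z)\in Z$ and $M\in\mathbb N$, $[p]_M=((y_1,\dots,y_M),(z_{-M},\dots,z_M))$. *)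

(* Defs.v *)
From Stdlib Require Import Bool Arith ZArith Reals List Lia.
Import ListNotations.

(* The fixed sequence q_1 < q_2 < ... is a function q : nat -> nat,
   only its values at indices k >= 1 matter. *)
Definition admissible_q (q : nat -> nat) : Prop :=
  2 <= q 1 /\
  (forall k, 1 <= k -> q k < q (k + 1)) /\
  (forall k, 1 <= k -> q (k + 1) > q k ^ 4 + 3 * q k).

Definition qi (q : nat -> nat) (i k : nat) : nat :=
  match i with
  | 0 => q (2 * k)
  | 1 => q (2 * k + 1)
  | 2 => q (2 * k) - 1
  | _ => q (2 * k + 1) - 1
  end.

Definition Lk (q : nat -> nat) (i k : nat) : nat :=
  qi q i (k + 1) / (3 * qi q i k).

(* Sequences y in {-1,0,1}^N are functions nat -> Z, indices n >= 1
   (the value at index 0 is irrelevant and never used). *)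
Definition sk (q : nat -> nat) (i k : nat) (n : nat) : Z :=
  let Q := qi q i k in
  let L := Lk q i k in
  if ((1 <=? n) && (n mod Q =? 0) && (1 <=? n / Q) && (n / Q <=? L))%bool then 1%Z
  else if ((1 <=? n) && (n mod Q =? 0) && (L <? n / Q) && (n / Q <=? 2 * L))%bool then (-1)%Z
  else 0%Z.

Definition shiftR (p : nat) (w : nat -> Z) (n : nat) : Z :=
  if n <=? p then 0%Z else w (n - p).

Definition inR (q : nat -> nat) (i k : nat) (y : nat -> Z) : Prop :=
  exists p, p <= qi q i k /\
    forall n, qi q i k <= n <= qi q i (k + 1) - 1 ->
      y n = shiftR p (sk q i k) n.

Definition inP (q : nat -> nat) (i : nat) (y : nat -> Z) : Prop :=
  (forall n, 1 <= n < qi q i 1 -> y n = 0%Z) /\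
  (forall k, 1 <= k -> inR q i k y).

Definition in3 (a : Z) : Prop := a = (-1)%Z \/ a = 0%Z \/ a = 1%Z.

Definition pt : Type := ((nat -> Z) * (Z -> Z))%type.

Definition inZspace (p : pt) : Prop :=
  (forall n, 1 <= n -> in3 (fst p n)) /\ (forall m, in3 (snd p m)).

Definition Tmap (p : pt) : pt :=
  (fun n => fst p (n + 1), fun m => snd p (m + fst p 1%nat)%Z).

Definition trunc (M : nat) (p : pt) : list Z * list Z :=
  (map (fst p) (seq 1 M),
   map (fun k => snd p (Z.of_nat k - Z.of_nat M)%Z) (seq 0 (2 * M + 1))).

Definition orbitSet (q : nat -> nat) (i : nat) (x : pt) : Prop :=
  exists n y z, inP q i y /\ (forall m, in3 (z m)) /\ x = Nat.iter n Tmap (y, z).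

(* closure in Z: the metric balls of radius 3^{-M} around p are exactly the
   points with the same truncation [.]_M *)
Definition Xset (q : nat -> nat) (i : nat) (p : pt) : Prop :=
  inZspace p /\
  forall M, exists x, orbitSet q i x /\ trunc M x = trunc M p.

Definition countUpTo (Lam : nat -> bool) (N : nat) : nat :=
  length (filter Lam (seq 1 N)).

(* Main.v *)
Require Import Defs.
From Stdlib Require Import Arith ZArith Reals List Lia Lra.

Ltac bools := repeat match goal with
 | H : (_ && _)%bool = true |- _ => apply andb_prop in H; destruct H
 | H : (_ =? _) = true |- _ => apply Nat.eqb_eq in H
 | H : (_ <=? _) = true |- _ => apply Nat.leb_le in H
 | H : (_ <? _) = true |- _ => apply Nat.ltb_lt in H end.

Section QS.
Variable q : nat -> nat.
Hypothesis Hq : admissible_q q.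
Variable l : nat.
Hypothesis Hl : l <= 3.

Lemma q_mono : forall k, 1 <= k -> forall t, q k + t <= q (k + t).
Proof.
  destruct Hq as [H1 [H2 H3]].
  intros k Hk t; induction t.
  - rewrite !Nat.add_0_r; lia.
  - specialize (H2 (k + t) ltac:(lia)). replace (k + S t) with (k + t + 1) by lia. lia.
Qed.

Lemma q_ge : forall k, 1 <= k -> k + 1 <= q k.
Proof.
  intros k Hk. destruct Hq as [H1 _].
  pose proof (q_mono 1 ltac:(lia) (k - 1)). replace (1 + (k-1)) with k in H by lia. lia.
Qed.

Lemma q_step : forall k, 1 <= k -> q k ^ 4 + 3 * q k <= q (k + 2) - 1.
Proof.
  intros k Hk. destruct Hq as [H1 [H2 H3]].
  pose proof (H3 (k+1) ltac:(lia)) as A. replace (k + 1 + 1) with (k+2) in A by lia.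
  pose proof (H2 k Hk) as B.
  assert (q k ^ 4 <= q (k+1) ^ 4) by (apply Nat.pow_le_mono_l; lia).
  lia.
Qed.

Definition Q k := qi q l k.

Lemma Q_ge : forall k, 1 <= k -> 2 * k <= Q k.
Proof.
  intros k Hk. unfold Q, qi.
  pose proof (q_ge (2*k) ltac:(lia)). pose proof (q_ge (2*k+1) ltac:(lia)).
  destruct l as [|[|[|]]]; lia.
Qed.

Lemma Q_step : forall k, 1 <= k -> Q k ^ 4 + 3 * Q k <= Q (k + 1).
Proof.
  intros k Hk. unfold Q, qi.
  replace (2 * (k+1) + 1) with ((2*k+1)+2) by lia.
  replace (2 * (k+1)) with (2*k+2) by lia.
  pose proof (q_step (2*k) ltac:(lia)). pose proof (q_step (2*k+1) ltac:(lia)).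
  assert ((q (2*k) - 1) ^ 4 <= q (2*k) ^ 4) by (apply Nat.pow_le_mono_l; lia).
  assert ((q (2*k+1) - 1) ^ 4 <= q (2*k+1) ^ 4) by (apply Nat.pow_le_mono_l; lia).
  remember (q (2*k) ^ 4) as A. remember (q (2*k+1) ^ 4) as B.
  remember ((q (2*k) - 1) ^ 4) as A'. remember ((q (2*k+1) - 1) ^ 4) as B'.
  destruct l as [|[|[|]]]; lia.
Qed.

Lemma Q_lt : forall k, 1 <= k -> Q k < Q (k + 1).
Proof.
  intros k Hk. pose proof (Q_step k Hk). pose proof (Q_ge k Hk).
  assert (Q k <= Q k ^ 4). { replace (Q k) with (Q k ^ 1) at 1 by apply Nat.pow_1_r. apply Nat.pow_le_mono_r; lia. }
  lia.
Qed.

Lemma Q_mono : forall k, 1 <= k -> forall t, Q k <= Q (k + t).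
Proof.
  intros k Hk t; induction t.
  - rewrite !Nat.add_0_r; lia.
  - pose proof (Q_lt (k + t) ltac:(lia)). replace (k + S t) with (k + t + 1) by lia. lia.
Qed.

Lemma Q_mono' : forall k k', 1 <= k -> k <= k' -> Q k <= Q k'.
Proof. intros. replace k' with (k + (k' - k)) by lia. apply Q_mono; lia. Qed.

Lemma block : forall m, Q 1 <= m -> exists k, 1 <= k /\ Q k <= m /\ m < Q (k + 1).
Proof.
  intros m Hm.
  assert (forall t, m < Q (t + 1) -> exists k, 1 <= k /\ Q k <= m /\ m < Q (k + 1)).
  { induction t; intros Ht.
    - simpl in Ht; lia.
    - destruct (lt_dec m (Q (t + 1))) as [Hlt|Hge].
      + apply IHt; auto.
      + exists (t + 1). repeat split; try lia. replace (t+1+1) with (S t + 1) by lia. auto. }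
  apply (H m). pose proof (Q_ge (m+1) ltac:(lia)). lia.
Qed.

Lemma extract : forall k p m, 1 <= k -> shiftR p (sk q l k) m <> 0%Z ->
  exists j, 1 <= j <= 2 * Lk q l k /\ m = p + Q k * j.
Proof.
  intros k p m Hk Hs. pose proof (Q_ge k Hk) as HQ.
  unfold shiftR in Hs. destruct (m <=? p) eqn:E; [contradiction|].
  apply Nat.leb_gt in E.
  unfold sk in Hs. cbv zeta in Hs. fold (Q k) in Hs.
  set (n := m - p) in *.
  assert (Hd : n = Q k * (n / Q k) + n mod Q k) by (apply Nat.div_mod_eq).
  destruct ((1 <=? n) && (n mod Q k =? 0) && (1 <=? n / Q k) && (n / Q k <=? Lk q l k))%bool eqn:E1.
  - bools.
    exists (n / Q k). split; lia.
  - destruct ((1 <=? n) && (n mod Q k =? 0) && (Lk q l k <? n / Q k) && (n / Q k <=? 2 * Lk q l k))%bool eqn:E2.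
    + bools.
      exists (n / Q k). split; lia.
    + contradiction.
Qed.

Lemma Lk_bound : forall k, 1 <= k -> 3 * Q k * Lk q l k <= Q (k + 1).
Proof.
  intros k Hk. pose proof (Q_ge k Hk). unfold Lk. fold (Q k) (Q (k+1)).
  apply Nat.Div0.mul_div_le.
Qed.

Lemma P_sep : forall y, inP q l y -> forall D, 1 <= D ->
  forall m m', Q (D + 1) <= m -> m < m' -> y m <> 0%Z -> y m' <> 0%Z -> m + D <= m'.
Proof.
  intros y [_ Hy] D HD m m' Hm Hmm' H1 H2.
  assert (Q 1 <= m) by (pose proof (Q_mono' 1 (D+1) ltac:(lia) ltac:(lia)); lia).
  destruct (block m H) as [k [Hk1 [Hk2 Hk3]]].
  destruct (block m' ltac:(lia)) as [k' [Hk1' [Hk2' Hk3']]].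
  assert (D + 1 <= k).
  { destruct (le_lt_dec (D+1) k); auto. pose proof (Q_mono' (k+1) (D+1) ltac:(lia) ltac:(lia)). lia. }
  assert (k <= k').
  { destruct (le_lt_dec k k'); auto. pose proof (Q_mono' (k'+1) k ltac:(lia) ltac:(lia)). lia. }
  pose proof (Q_ge k Hk1) as Hg.
  destruct (Hy k Hk1) as [p [Hp Hyk]].
  assert (Hm1 : y m = shiftR p (sk q l k) m) by (apply Hyk; unfold Q in *; lia).
  rewrite Hm1 in H1. destruct (extract k p m Hk1 H1) as [j [Hj Hmj]].
  destruct (Nat.eq_dec k k') as [<-|Hne].
  - assert (Hm2 : y m' = shiftR p (sk q l k) m') by (apply Hyk; unfold Q in *; lia).
    rewrite Hm2 in H2. destruct (extract k p m' Hk1 H2) as [j' [Hj' Hmj']].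
    assert (j < j') by nia. nia.
  - pose proof (Q_mono' (k+1) k' ltac:(lia) ltac:(lia)).
    pose proof (Lk_bound k Hk1). pose proof (Q_step k Hk1).
    unfold Q in *.
    assert (qi q l k * qi q l k <= qi q l k ^ 4) by (simpl; nia).
    assert (qi q l k * j <= qi q l k * (2 * Lk q l k)) by (apply Nat.mul_le_mono_l; lia).
    nia.
Qed.
End QS.
Open Scope bool_scope.

Fixpoint Ssum (y : nat -> Z) (t : nat) : Z :=
  match t with 0 => 0%Z | S t' => (Ssum y t' + y (S t'))%Z end.

Lemma iter_T : forall t (p : pt),
  (forall j, fst (Nat.iter t Tmap p) j = fst p (j + t)) /\
  (forall m, snd (Nat.iter t Tmap p) m = snd p (m + Ssum (fst p) t)%Z).
Proof.
  induction t; intros p.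
  - simpl. split; intros; f_equal; lia.
  - destruct (IHt p) as [A B]. simpl Nat.iter. unfold Tmap at 1. simpl fst; simpl snd.
    split; intros.
    + rewrite A. f_equal. lia.
    + rewrite B, A. f_equal. replace (1 + t) with (S t) by lia. simpl. ring.
Qed.

Lemma map_eq_in {A B} (f g : A -> B) l x : map f l = map g l -> In x l -> f x = g x.
Proof.
  induction l; simpl; [tauto|]. intros H [<-|Hi]; inversion H; auto.
Qed.

Lemma trunc_fst : forall M a b, trunc M a = trunc M b -> forall j, 1 <= j <= M -> fst a j = fst b j.
Proof.
  intros M a b H j Hj. apply (f_equal fst) in H. simpl in H.
  apply (map_eq_in _ _ _ _ H). apply in_seq. lia.
Qed.

Lemma len_split {A} (h : A -> bool) l :
  length l = length (filter h l) + length (filter (fun x => negb (h x)) l).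
Proof. induction l; simpl; [auto|]. destruct (h a); simpl; lia. Qed.

Lemma filter_split {A} (g h : A -> bool) l :
  length (filter g l) = length (filter (fun x => g x && h x) l) + length (filter (fun x => g x && negb (h x)) l).
Proof. induction l; simpl; [auto|]. destruct (g a), (h a); simpl; lia. Qed.

Lemma filter_or {A} (g h : A -> bool) l :
  length (filter (fun x => g x || h x) l) <= length (filter g l) + length (filter h l).
Proof. induction l; simpl; [auto|]. destruct (g a), (h a); simpl; lia. Qed.

Lemma filter_lt_bound (g : nat -> bool) B a N :
  (forall x, g x = true -> x < B) -> length (filter g (seq a N)) <= B.
Proof.
  intros Hg. rewrite <- (length_seq B 0). apply NoDup_incl_length.
  - apply NoDup_filter, seq_NoDup.
  - intros x Hx. apply filter_In in Hx. destruct Hx as [_ Hx]. apply Hg in Hx. apply in_seq; lia.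
Qed.

Lemma sep_one (f : nat -> bool) D a N :
  (forall x y, f x = true -> f y = true -> x < y -> x + D <= y) -> N <= D ->
  length (filter f (seq a N)) <= 1.
Proof.
  intros Hs HN.
  assert (ND : NoDup (filter f (seq a N))) by (apply NoDup_filter, seq_NoDup).
  assert (Hin : forall x, In x (filter f (seq a N)) -> f x = true /\ a <= x < a + N).
  { intros x Hx. apply filter_In in Hx. destruct Hx as [H1 H2]. apply in_seq in H1. auto. }
  destruct (filter f (seq a N)) as [|x [|y r]]; simpl; try lia.
  exfalso. inversion ND; subst.
  destruct (Hin x ltac:(simpl; auto)) as [fx bx].
  destruct (Hin y ltac:(simpl; auto)) as [fy By].
  assert (x <> y) by (intro; subst; apply H1; simpl; auto).
  destruct (lt_dec x y).
  - pose proof (Hs x y fx fy l). lia.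
  - pose proof (Hs y x fy fx ltac:(lia)). lia.
Qed.

Lemma sep_count (f : nat -> bool) D :
  (forall x y, f x = true -> f y = true -> x < y -> x + D <= y) -> 1 <= D ->
  forall N a, length (filter f (seq a N)) <= N / D + 1.
Proof.
  intros Hs HD N. induction N as [N IH] using (well_founded_induction lt_wf). intros a.
  destruct (le_lt_dec N D).
  - pose proof (sep_one f D a N Hs l). lia.
  - replace N with (D + (N - D)) by lia. rewrite seq_app, filter_app, length_app.
    pose proof (sep_one f D a D Hs (Nat.le_refl D)). pose proof (IH (N - D) ltac:(lia) (a + D)).
    replace (D + (N - D)) with ((N - D) + 1 * D) by lia. rewrite Nat.div_add by lia. lia.
Qed.

Lemma filter_false_len {A} (l : list A) : length (filter (fun _ => false) l) = 0.
Proof. induction l; simpl; auto. Qed.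

Lemma exists_count (h : nat -> nat -> bool) J l c :
  (forall j, In j J -> length (filter (h j) l) <= c) ->
  length (filter (fun n => existsb (fun j => h j n) J) l) <= length J * c.
Proof.
  induction J; intros Hc; simpl.
  - rewrite filter_false_len. lia.
  - eapply Nat.le_trans. apply (filter_or (h a) (fun n => existsb (fun j => h j n) J)).
    pose proof (Hc a ltac:(simpl; auto)). assert (IH := IHJ (fun j Hj => Hc j ltac:(simpl; auto))). lia.
Qed.

Lemma filter_shift (f : nat -> bool) j N : forall a,
  length (filter (fun n => f (n + j)) (seq a N)) = length (filter f (seq (a + j) N)).
Proof.
  induction N; intros a; simpl; auto. destruct (f (a + j)); simpl; rewrite IHN; auto.
Qed.

Lemma negb_forallb {A} (f : A -> bool) l : negb (forallb f l) = existsb (fun x => negb (f x)) l.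
Proof. induction l; simpl; auto. rewrite Bool.negb_andb, IHl. auto. Qed.

Lemma R_unbounded : forall x : R, exists n : nat, (x < INR n)%R.
Proof.
  intros x. destruct (archimed x) as [H1 _].
  destruct (Z_le_gt_dec 0 (up x)).
  - exists (Z.to_nat (up x)). rewrite INR_IZR_INZ, Z2Nat.id by lia; lra.
  - exists 0. simpl. assert (up x <= -1)%Z by lia. apply IZR_le in H. lra.
Qed.

Theorem mainTheorem11 (q : nat -> nat) (Hq : admissible_q q)
  (l : nat) (Hl : l <= 3) (M H : nat) (HM : 1 <= M) (HH : 1 <= H)
  (p : pt) (Hp : Xset q l p) :
  exists Lam : nat -> bool,
    Lam 0 = false /\
    Un_cv (fun N => (INR (countUpTo Lam N) / INR N)%R) 1%R /\
    (forall n, Lam n = true ->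
       forall h, h <= H - 1 ->
         trunc M (Nat.iter (n + h) Tmap p) = trunc M (Nat.iter n Tmap p)).
Proof.
  assert (F1 : forall D, 1 <= D -> forall m m', Q q l (D+1) <= m -> m < m' ->
     fst p m <> 0%Z -> fst p m' <> 0%Z -> m + D <= m').
  { intros D HD m m' Hm Hmm' H1 H2.
    destruct Hp as [_ Hx]. destruct (Hx m') as [x [[n [y [z [HP [_ Hxe]]]]] Ht]].
    pose proof (trunc_fst _ _ _ Ht) as Hf.
    pose proof (Q_ge q Hq l Hl (D+1) ltac:(lia)).
    destruct (iter_T n (y, z)) as [A1 _]. rewrite <- Hxe in A1. simpl in A1.
    rewrite <- Hf, A1 in H1, H2 by lia.
    pose proof (P_sep q Hq l Hl y HP D HD (m + n) (m' + n) ltac:(lia) ltac:(lia) H1 H2). lia. }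
  set (nz := fun m => negb (Z.eqb (fst p m) 0)).
  assert (F3 : forall D, 1 <= D -> exists B, forall a N, length (filter nz (seq a N)) <= N / D + 1 + B).
  { intros D HD. exists (Q q l (D+1)). intros a N.
    rewrite (filter_split nz (fun m => Q q l (D+1) <=? m)).
    pose proof (sep_count (fun x => nz x && (Q q l (D + 1) <=? x)) D) as S1.
    pose proof (filter_lt_bound (fun x => nz x && negb (Q q l (D + 1) <=? x)) (Q q l (D+1)) a N) as S2.
    assert (length (filter (fun x => nz x && (Q q l (D + 1) <=? x)) (seq a N)) <= N / D + 1).
    { apply S1; auto. intros x y Hx Hy Hxy. unfold nz in Hx, Hy.
      apply andb_prop in Hx, Hy. destruct Hx as [Hx1 Hx2], Hy as [Hy1 Hy2].
      apply Nat.leb_le in Hx2. apply F1; auto.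
      - intro E. rewrite E in Hx1. discriminate.
      - intro E. rewrite E in Hy1. discriminate. }
    assert (length (filter (fun x => nz x && negb (Q q l (D + 1) <=? x)) (seq a N)) <= Q q l (D + 1)).
    { apply S2. intros x Hx. apply andb_prop in Hx. destruct Hx as [_ Hx].
      apply Bool.negb_true_iff, Nat.leb_gt in Hx. auto. }
    lia. }
  set (K := M + H).
  exists (fun n => (1 <=? n) && forallb (fun j => Z.eqb (fst p (n + j)) 0) (seq 1 K)).
  split; [reflexivity|]. split.
  - intros eps Heps. unfold R_dist.
    destruct (R_unbounded (2 * INR K / eps)) as [d Hd]. set (D := S d).
    destruct (F3 D ltac:(unfold D; lia)) as [B HB].
    set (C := K * (1 + B)).
    destruct (R_unbounded (2 * INR C / eps)) as [n0 Hn0]. exists (S n0). intros N HN.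
    set (Lam := (fun n => (1 <=? n) && forallb (fun j => Z.eqb (fst p (n + j)) 0) (seq 1 K))).
    unfold countUpTo. fold Lam.
    set (cnt := length (filter Lam (seq 1 N))).
    set (bad := length (filter (fun x => negb (Lam x)) (seq 1 N))).
    assert (Hlen : N = cnt + bad) by (unfold cnt, bad; rewrite <- len_split, length_seq; auto).
    assert (Hbad : bad <= K * (N / D + 1 + B)).
    { unfold bad.
      rewrite (filter_ext_in _ (fun n => existsb (fun j => (fun j n => nz (n + j)) j n) (seq 1 K))).
      - eapply Nat.le_trans; [apply (exists_count (fun j n => nz (n+j)) (seq 1 K) _ (N/D+1+B))|rewrite length_seq; lia].
        intros j _.
        rewrite (filter_shift nz j N 1). apply HB.
      - intros a Ha. apply in_seq in Ha. unfold Lam.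
        replace (1 <=? a) with true by (symmetry; apply Nat.leb_le; lia). simpl.
        rewrite negb_forallb. reflexivity. }
    assert (HDd : D * (N / D) <= N) by (apply Nat.Div0.mul_div_le).
    assert (Hn : D * bad <= K * N + D * C).
    { assert (D * bad <= D * (K * (N / D + 1 + B))) by (apply Nat.mul_le_mono_l; auto).
      unfold C. nia. }
    apply le_INR in Hn. rewrite plus_INR, !mult_INR in Hn.
    apply (f_equal INR) in Hlen. rewrite plus_INR in Hlen.
    assert (HD0 : (0 < INR D)%R) by (apply lt_0_INR; unfold D; lia).
    assert (HN0 : (0 < INR N)%R) by (apply lt_0_INR; lia).
    assert (HDe : (2 * INR K < INR D * eps)%R).
    { assert (INR d <= INR D)%R by (apply le_INR; unfold D; lia).
      apply (Rmult_lt_compat_r eps) in Hd; auto. unfold Rdiv in Hd.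
      rewrite Rmult_assoc, Rinv_l in Hd by lra. nra. }
    assert (HNe : (2 * INR C < INR N * eps)%R).
    { assert (INR n0 <= INR N)%R by (apply le_INR; lia).
      apply (Rmult_lt_compat_r eps) in Hn0; auto. unfold Rdiv in Hn0.
      rewrite Rmult_assoc, Rinv_l in Hn0 by lra. nra. }
    assert (Hb : (INR bad < eps * INR N)%R).
    { assert (INR D * INR bad < INR D * (eps * INR N))%R by nra.
      apply Rmult_lt_reg_l in H0; auto. }
    assert (Hb0 : (0 <= INR bad)%R) by apply pos_INR.
    replace (INR cnt / INR N - 1)%R with (- (INR bad / INR N))%R by (replace (INR cnt) with (INR N - INR bad)%R by lra; field; lra).
    rewrite Rabs_Ropp, Rabs_right.
    + apply (Rmult_lt_reg_r (INR N)); auto. unfold Rdiv. rewrite Rmult_assoc, Rinv_l by lra. lra.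
    + unfold Rdiv. apply Rle_ge, Rmult_le_pos; auto. left; apply Rinv_0_lt_compat; auto.
  - intros n HL h Hh. apply andb_prop in HL. destruct HL as [_ HL].
    rewrite forallb_forall in HL.
    assert (Z0 : forall j, 1 <= j <= K -> fst p (n + j) = 0%Z).
    { intros j Hj. apply Z.eqb_eq, HL, in_seq. lia. }
    assert (SS : forall h, h <= H - 1 -> Ssum (fst p) (n + h) = Ssum (fst p) n).
    { induction h0; intros Hh0.
      - rewrite Nat.add_0_r; auto.
      - replace (n + S h0) with (S (n + h0)) by lia. simpl.
        rewrite IHh0 by lia. replace (S (n + h0)) with (n + (h0 + 1)) by lia.
        rewrite Z0 by (unfold K; lia). ring. }
    destruct (iter_T (n + h) p) as [A1 B1]. destruct (iter_T n p) as [A2 B2].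
    unfold trunc. f_equal.
    + apply map_ext_in. intros j Hj. apply in_seq in Hj. rewrite A1, A2.
      replace (j + (n + h)) with (n + (j + h)) by lia. replace (j + n) with (n + j) by lia.
      rewrite !Z0 by (unfold K; lia). reflexivity.
    + apply map_ext. intros k. rewrite B1, B2, SS by lia. reflexivity.
Qed.
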